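(* For all positive integers $n$ and $k$, the number of entries equal to $k$ in row $a_1(n)$ of $T_1$ equals $\binom{n-1}{k-1}$.
   Context: For a positive integer $m$, the triangle $T_m$ is an array whose row $x$ ($x=1,2,\dots$) has $x$ entries, in columns $0,\dots,x-1$. Row $1$ is the single entry $1$. For $x>1$, row $x$ is obtained from row $x-1$ by rotating it cyclically left by $m$ positions (the entry in column $c$ of row $x-1$ moves to column $(c-m)\bmod(x-1)\in\{0,\dots,x-2\}$ of row $x$), then appending in column $x-1$ a new entry equal to $1$ plus the entry in column $0$ of row $x-1$. $T_m(x,c)$ denotes the entry in row $x$, column $c$, and $a_m(n)=\min\{x\in\mathbb{N}: T_m(x,x-1)=n\}$. Here $m=1$. The binomial coefficient $\binom{n-1}{k-1}$ is $0$ when $k-1>n-1$. *)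

(* Defs.v *)
From mathcomp Require Import all_boot.
Set Implicit Arguments. Unset Strict Implicit. Unset Printing Implicit Defensive.

(* trow m i is row (i+1) of the triangle T_m, as a sequence of its entries
   in columns 0, ..., i.  Row 1 is [:: 1]; row x (x > 1) is row x-1 rotated
   cyclically left by m positions (i.e. by m mod (x-1)), followed by
   1 + (entry in column 0 of row x-1). *)
Fixpoint trow (m i : nat) : seq nat :=
  match i with
  | 0 => [:: 1]
  | i'.+1 => let r := trow m i' in
             rcons (rot (m %% size r) r) (head 0 r).+1
  end.

Definition Trow (m x : nat) : seq nat := trow m x.-1.

Definition T (m x c : nat) : nat := nth 0 (Trow m x) c.

Definition is_a (m n x : nat) : Prop :=
  [/\ 0 < x, T m x x.-1 = n & forall y, 0 < y -> T m y y.-1 = n -> x <= y].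

(* Main.v *)
Require Import Defs.
From mathcomp Require Import all_boot.

Fixpoint pcf (f n : nat) : nat :=
  if f is f'.+1 then (if n is 0 then 0 else odd n + pcf f' n./2) else 0.
Definition pc n := pcf n n.

Lemma leq_half n : n./2 <= n.
Proof. by rewrite leq_half_double -addnn (leq_trans (leq_addr n n)). Qed.

Lemma uphalf_le n : uphalf n <= n.
Proof. case: n => //= n; rewrite ltnS; exact: leq_half. Qed.

Lemma pcf_indep f1 f2 n : n <= f1 -> n <= f2 -> pcf f1 n = pcf f2 n.
Proof.
elim: f1 f2 n => [|f1 IH] [|f2] [|n] //= H1 H2.
congr (_ + _); apply: IH.
  by apply: leq_trans (uphalf_le n) _.
by apply: leq_trans (uphalf_le n) _.
Qed.

Lemma pc_rec m : pc m = odd m + pc m./2.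
Proof.
case: m => [//|m]. rewrite /pc /=. congr (_ + _). apply: pcf_indep => //.
case: m => [//|m] /=. rewrite ltnS. apply: leq_trans (leq_half _) _. done.
Qed.

Lemma pc_even a : pc a.*2 = pc a.
Proof. by rewrite pc_rec odd_double doubleK. Qed.

Lemma pc_odd a : pc a.*2.+1 = (pc a).+1.
Proof. by rewrite pc_rec /= odd_double uphalf_double. Qed.

Lemma trow_pc i : trow 1 i = [seq pc j | j <- iota i.+1 i.+1].
Proof.
elim: i => [//|i IH] /=.
rewrite IH size_map size_iota /=.
have -> : rot (1 %% i.+1) (pc i.+1 :: [seq pc j | j <- iota i.+2 i])
        = rcons [seq pc j | j <- iota i.+2 i] (pc i.+1).
  case: i {IH} => [//|i]. by rewrite modn_small // rot1_cons.
transitivity [seq pc j | j <- iota i.+2 (i + 2)]; last by rewrite addn2.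
rewrite iotaD map_cat /= -!cats1 -catA; congr (_ ++ _).
have -> : (i.+2 + i = (i.+1).*2)%N by rewrite -addnn addSnnS.
by rewrite pc_even pc_odd.
Qed.

From mathcomp Require Import zify.

Lemma pc_pos_strong N : forall m, m <= N -> (pc m = 0 -> m = 0) /\ (2 ^ pc m <= m.+1).
Proof.
elim: N => [|N IH] m Hm.
  by move: Hm; rewrite leqn0 => /eqP ->.
case: m Hm => [//|m] Hm.
have Hh : (m.+1)./2 <= N.
  rewrite -ltnS. apply: leq_trans _ Hm. rewrite ltnS.
  case: m => [//|m] /=. rewrite ltnS.
  exact: leq_trans (leq_half m) _.
have [IH1 IH2] := IH _ Hh.
rewrite pc_rec. split.
  move: (odd_double_half m.+1); case: (odd m.+1) => E //= H0.
  by rewrite (IH1 H0) in E.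
rewrite expnD.
have E := odd_double_half m.+1.
case: (odd m.+1) E => /= E.
  move: IH2 => /= IH2. rewrite expn1. lia.
move: IH2 => /= IH2. rewrite expn0 mul1n. lia.
Qed.

Lemma pc_bound m : 2 ^ pc m <= m.+1.
Proof. by have [] := @pc_pos_strong m m (leqnn m). Qed.

Lemma pc_eq0 m : pc m = 0 -> m = 0.
Proof. by have [] := @pc_pos_strong m m (leqnn m). Qed.

Lemma count_split (P : pred nat) N a :
  count P (iota a.*2 N.*2) =
  count (fun j => P j.*2) (iota a N) + count (fun j => P j.*2.+1) (iota a N).
Proof.
elim: N a => [|N IH] a //=.
rewrite -doubleS IH. lia.
Qed.

Lemma count_pc0 N a : 0 < a -> count (fun c => pc c == 0) (iota a N) = 0.
Proof.
elim: N a => [|N IH] a Ha //=.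
rewrite IH //. case E: (pc a == 0) => //. by move/eqP/pc_eq0: E => E; rewrite E in Ha.
Qed.

Lemma count_pow j k :
  count (fun c => pc c == k.+1) (iota (2 ^ j) (2 ^ j)) = 'C(j, k).
Proof.
elim: j k => [|j IH] k.
  by case: k.
rewrite expnS mul2n count_split.
rewrite (eq_count (a2 := fun c => pc c == k.+1)); last by move=> c; rewrite pc_even.
rewrite (eq_count (a1 := fun c => pc c.*2.+1 == k.+1) (a2 := fun c => pc c == k));
  last by move=> c /=; rewrite pc_odd.
rewrite IH. case: k => [|k].
  by rewrite !bin0 count_pc0 ?expn_gt0.
by rewrite binS IH addnC.
Qed.

Lemma pc_pow n : pc (2 ^ n).-1 = n.
Proof.
elim: n => [//|n IH].
have -> : (2 ^ n.+1).-1 = ((2 ^ n).-1).*2.+1.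
  rewrite expnS. have := expn_gt0 2 n. lia.
by rewrite pc_odd IH.
Qed.

Lemma Tdiag y : 0 < y -> T 1 y y.-1 = pc (y + y.-1).
Proof.
move=> Hy. rewrite /T /Trow trow_pc prednK // (nth_map 0) ?size_iota ?prednK //.
  by rewrite nth_iota ?prednK.
Qed.

Theorem mainTheorem16 (n k : nat) : 0 < n -> 0 < k ->
  exists x, is_a 1 n x /\ count_mem k (Trow 1 x) = 'C(n.-1, k.-1).
Proof.
case: n => [//|n] _; case: k => [//|k] _ /=.
have Hx : 0 < 2 ^ n by rewrite expn_gt0.
exists (2 ^ n); split.
  split => //.
    rewrite Tdiag //. have -> : 2 ^ n + (2 ^ n).-1 = (2 ^ n.+1).-1.
      rewrite expnS; lia.
    exact: pc_pow.
  move=> y Hy; rewrite Tdiag // => Hp.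
  have := pc_bound (y + y.-1). rewrite Hp expnS. lia.
rewrite /Trow trow_pc prednK // count_map.
rewrite -(count_pow n k). apply: eq_count => c /=. by rewrite eq_sym.
Qed.
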